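(* Suppose $A\oplus C=\mathbb Z$, where $A$ is a finite set of nonnegative integers, $k>1$, and $C\subseteq k\mathbb Z$. For $i=0,1,\dots,k-1$ let $A_i=\{a\in A: a\equiv i\pmod k\}$, $a_i=\min(A_i)$, and $\bar A_i=\{(a-a_i)/k: a\in A_i\}$. Then: (1) $A(x)=x^{a_0}\bar A_0(x^k)+x^{a_1}\bar A_1(x^k)+\dots+x^{a_{k-1}}\bar A_{k-1}(x^k)$; (2) every $\bar A_i\oplus C/k=\mathbb Z$, where $C/k=\{c/k:c\in C\}$; (3) every $\#\bar A_i=(\#A)/k$; (4) $S_{\bar A_0}=S_{\bar A_1}=\dots=S_{\bar A_{k-1}}$; (5) when $k$ is prime, $S_A=\{k\}\cup S_{k\bar A_0}$ (where $k\bar A_0=\{ka:a\in\bar A_0\}$), and if every $\bar A_i(x)$ satisfies (T2), then $A(x)$ satisfies (T2).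
   Context: $A\oplus C=\mathbb Z$ means every integer is uniquely $a+c$ with $a\in A$, $c\in C$. For a finite set $X$ of nonnegative integers, $X(x)=\sum_{a\in X}x^a$ and $S_X$ is the set of prime powers $s=p^\alpha$ ($p$ prime, $\alpha\ge1$) such that the cyclotomic polynomial $\Phi_s(x)$ divides $X(x)$. $X(x)$ satisfies (T2) if whenever $s_1,\dots,s_m\in S_X$ are powers of distinct primes, $\Phi_{s_1\cdots s_m}(x)$ divides $X(x)$. *)

(* Defs.v *)
From HB Require Import structures.
From mathcomp Require Import all_boot all_order all_algebra all_field.
Set Implicit Arguments. Unset Strict Implicit. Unset Printing Implicit Defensive.
Import Order.TTheory GRing.Theory Num.Theory.
Local Open Scope ring_scope.

(* Finite sets of nonnegative integers are represented by duplicate-free seq nat. *)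

Definition tiles (A : seq nat) (C : int -> Prop) : Prop :=
  forall z : int, exists! p : nat * int,
    p.1 \in A /\ C p.2 /\ z = (p.1%:Z + p.2)%R.

Definition maskpoly (X : seq nat) : {poly int} := \sum_(a <- X) 'X^a.

Definition prime_power (s : nat) : Prop :=
  exists p alpha : nat, prime p /\ (0 < alpha)%N /\ s = (p ^ alpha)%N.

Definition SX (X : seq nat) (s : nat) : Prop :=
  prime_power s /\ ('Phi_s %| maskpoly X).

(* (T2): for s_1..s_m in S_X (m >= 1) powers of distinct primes,
   Phi_{s_1...s_m} divides X(x).  pdiv (p^alpha) = p. *)
Definition T2 (X : seq nat) : Prop :=
  forall ss : seq nat, ss != [::] ->
    (forall s, s \in ss -> SX X s) ->
    uniq (map pdiv ss) ->
    'Phi_(\prod_(s <- ss) s)%N %| maskpoly X.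

Definition Ares (A : seq nat) (k i : nat) : seq nat :=
  [seq a <- A | a %% k == i]%N.

Definition seqmin (s : seq nat) : nat := foldr minn (head 0%N s) s.

Definition amin (A : seq nat) (k i : nat) : nat := seqmin (Ares A k i).

Definition Abar (A : seq nat) (k i : nat) : seq nat :=
  undup [seq ((a - amin A k i) %/ k)%N | a <- Ares A k i].

(* C/k = {c/k : c in C} (for C inside kZ) *)
Definition Cdiv (C : int -> Prop) (k : nat) : int -> Prop :=
  fun z => C (k%:Z * z)%R.

Definition scaleset (k : nat) (X : seq nat) : seq nat := [seq (k * a)%N | a <- X].

(* Main.v *)
Require Import Defs.
From HB Require Import structures.
From mathcomp Require Import all_boot all_order all_algebra all_field.
From mathcomp Require Import zify.
From Stdlib Require Import ClassicalEpsilon.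
Import Order.TTheory GRing.Theory Num.Theory.
Local Open Scope ring_scope.
Set Implicit Arguments. Unset Strict Implicit.


Definition pC (p : {poly int}) : {poly algC} := map_poly intr p.
Definition ev (X : seq nat) (z : algC) : algC := \sum_(a <- X) z ^+ a.

Lemma pC_mask X z : (pC (maskpoly X)).[z] = ev X z.
Proof.
rewrite /pC /maskpoly rmorph_sum horner_sum; apply: eq_bigr => a _.
by rewrite rmorphXn /= map_polyX hornerXn.
Qed.

Lemma RC n (z : algC) (Q : {poly int}) :
  n.-primitive_root z -> ('Phi_n %| Q) = root (pC Q) z.
Proof.
move=> pz; have mon := Cyclotomic_monic n.
have un : lead_coef 'Phi_n \is a GRing.unit by rewrite (monicP mon) unitr1.
have Hc := Cintr_Cyclotomic pz.
have rz : root (cyclotomic z n) z by rewrite root_cyclotomic.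
apply/idP/idP.
  move=> /(Pdiv.IdomainUnit.divpK un) <-.
  by rewrite /pC rmorphM rootM /= Hc rz orbT.
move=> rQ; rewrite /dvdp.
set r := Q %% 'Phi_n.
have eQ := Pdiv.IdomainUnit.divp_eq un Q.
have rr : root (pC r) z.
  move: rQ; rewrite {1}eQ /pC rmorphD rmorphM /= Hc /root hornerD hornerM.
  by rewrite (rootP rz) mulr0 add0r.
have [pm [Dpm _] dv] := minCpolyP z.
have hq : pm %| map_poly (intr : int -> rat) r.
  rewrite -dv -map_poly_comp.
  rewrite (@eq_map_poly _ _ _ (intr : int -> algC)); first exact: rr.
  by move=> x /=; rewrite rmorph_int.
have szr : (size r < size 'Phi_n)%N by rewrite ltn_modpN0 // monic_neq0.
have szpm : size pm = size 'Phi_n.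
  rewrite -(size_map_poly (ratr : {rmorphism rat -> algC})) -Dpm.
  rewrite (minCpoly_cyclotomic pz) -Hc /pC size_map_inj_poly //.
  exact: intr_inj.
apply/eqP; apply/eqP/negPn/negP => nr.
have nr' : map_poly (intr : int -> rat) r != 0.
  by rewrite -size_poly_eq0 size_map_inj_poly ?size_poly_eq0 //; exact: intr_inj.
have := dvdp_leq nr' hq.
rewrite size_map_inj_poly //; last exact: intr_inj.
by rewrite szpm leqNgt szr.
Qed.

Lemma RCev n (z : algC) X :
  n.-primitive_root z -> ('Phi_n %| maskpoly X) = (ev X z == 0).
Proof. by move=> pz; rewrite (RC _ pz) /root pC_mask. Qed.


Lemma prim_exists n : (0 < n)%N -> exists z : algC, n.-primitive_root z.
Proof. by move=> n0; case: (C_prim_root_exists n0) => z hz; exists z. Qed.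

Lemma prim_uniq m n (z : algC) :
  m.-primitive_root z -> n.-primitive_root z -> m = n.
Proof.
move=> pm pn; apply/eqP; rewrite eqn_dvd.
by rewrite (prim_order_dvd pm) (prim_expr_order pn) (prim_order_dvd pn) (prim_expr_order pm) eqxx.
Qed.

Lemma rootPhi m n (z : algC) : (0 < m)%N -> n.-primitive_root z ->
  root (pC 'Phi_m) z = (m == n).
Proof.
move=> m0 pz; have [w pw] := prim_exists m0.
rewrite /pC (Cintr_Cyclotomic pw) (root_cyclotomic pw).
apply/idP/eqP => [pm|->//]; exact: prim_uniq pm pz.
Qed.

Lemma prod_dvd (Q : {poly int}) (ns : seq nat) :
  uniq ns -> (forall n, n \in ns -> (0 < n)%N) ->
  (forall n, n \in ns -> 'Phi_n %| Q) ->
  exists R, Q = R * \prod_(n <- ns) 'Phi_n.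
Proof.
elim: ns => [|n ns IH] /=.
  by move=> _ _ _; exists Q; rewrite big_nil mulr1.
move=> /andP[nn un] pos dv.
have [R eR] : exists R, Q = R * \prod_(n <- ns) 'Phi_n.
  by apply: IH => // m hm; [apply: pos | apply: dv]; rewrite inE hm orbT.
have n0 : (0 < n)%N by apply: pos; rewrite inE eqxx.
have [z pz] := prim_exists n0.
have : root (pC Q) z by rewrite -(RC _ pz) dv // inE eqxx.
rewrite eR /pC rmorphM rmorph_prod /= rootE hornerM horner_prod mulf_eq0 => /orP[rR|H].
  move: rR; rewrite -rootE -/(pC R) -(RC _ pz) => dR.
  have un1 : lead_coef 'Phi_n \is a GRing.unit by rewrite (monicP (Cyclotomic_monic n)) unitr1.
  exists (R %/ 'Phi_n); rewrite big_cons mulrA.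
  by rewrite (Pdiv.IdomainUnit.divpK un1 dR).
exfalso; move: H; apply/negP; rewrite prodf_seq_neq0; apply/allP => m hm /=.
rewrite -rootE (rootPhi _ pz); last by apply: pos; rewrite inE hm orbT.
by apply/eqP => emn; move: nn; rewrite -emn hm.
Qed.

Lemma Phi_pp1 p j : prime p -> (0 < j)%N -> ('Phi_(p ^ j)).[1] = p%:R.
Proof.
move=> pp j0; set m := (p ^ j.-1)%N.
have pjm : (p ^ j = m * p)%N by rewrite /m -expnSr prednK.
have m0 : (0 < m)%N by rewrite expn_gt0 prime_gt0.
have p1 : (1 < p)%N by apply: prime_gt1.
set G : {poly int} := \sum_(i < p) ('X^m) ^+ i.
have EG : G * ('X^m - 1) = 'X^(p ^ j) - 1.
  by rewrite mulrC -subrX1 -exprM pjm.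
have pj0 : (0 < p ^ j)%N by rewrite expn_gt0 prime_gt0.
have [z pz] := prim_exists pj0.
have dG : 'Phi_(p ^ j) %| G.
  rewrite (RC _ pz); apply/rootP.
  have hX : forall r, (pC ('X^r - 1)).[z] = z ^+ r - 1.
    by move=> r; rewrite /pC rmorphB /= rmorph1 rmorphXn /= map_polyX !hornerE.
  have := congr1 (fun q => (pC q).[z]) EG; rewrite /= {1}/pC rmorphM hornerM -/(pC G) -/(pC ('X^m - 1)) !hX.
  rewrite (prim_expr_order pz) subrr => /eqP.
  rewrite mulf_eq0 => /orP[/eqP//|]; rewrite subr_eq0 -(prim_order_dvd pz) => /dvdn_leq.
  by move=> /(_ m0); rewrite pjm; nia.
have mXm : ('X^m - 1 : {poly int}) \is monic by exact: (monicXnsubC 1 m0).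
have mG : G \is monic.
  by rewrite -(monicMr _ mXm) EG; exact: (monicXnsubC 1 pj0).
have szG : size G = size 'Phi_(p ^ j).
  have := congr1 (fun q : {poly int} => size q) EG; rewrite /=; rewrite size_mul ?monic_neq0 // -polyC1 !size_XnsubC //.
  rewrite size_Cyclotomic totient_pfactor // -/m.
  move: (size G) => s; rewrite pjm; clearbody m; clear -p1.
  move=> h; nia.
have eG : 'Phi_(p ^ j) = G.
  apply/eqP; rewrite -(Pdiv.Idomain.eqp_monic (Cyclotomic_monic _) mG).
  by rewrite -(Pdiv.Idomain.dvdp_size_eqp dG) szG.
rewrite eG /G horner_sum.
under eq_bigr => i _ do rewrite -exprM hornerXn expr1n.
by rewrite sumr_const card_ord.
Qed.

Lemma mask1 X : (maskpoly X).[1] = (size X)%:R.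
Proof.
rewrite /maskpoly horner_sum; elim: X => [|a X IH]; first by rewrite big_nil.
by rewrite big_cons IH hornerXn expr1n /= -add1n natrD.
Qed.

Lemma evC1 X : ev X 1 = (size X)%:R.
Proof.
rewrite /ev; elim: X => [|a X IH]; first by rewrite big_nil.
by rewrite big_cons IH expr1n /= -add1n natrD.
Qed.

Lemma prod_const_seq (T : Type) (r : seq T) (c : int) : \prod_(i <- r) c = c ^+ size r.
Proof. by elim: r => [|a r IH]; rewrite ?big_nil ?big_cons ?IH ?exprS. Qed.

Lemma pcount_dvd (X : seq nat) p N : prime p ->
  (p ^ count (fun j => ('Phi_(p ^ j) %| maskpoly X)%R) (iota 1 N) %| size X)%N.
Proof.
move=> pp; set P := (fun j => _).
set ns := map (fun j => p ^ j)%N (filter P (iota 1 N)).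
have uns : uniq ns.
  rewrite map_inj_in_uniq ?filter_uniq ?iota_uniq // => a b _ _ /eqP.
  by rewrite eqn_exp2l ?prime_gt1 // => /eqP.
have [R eR] : exists R, maskpoly X = R * \prod_(n <- ns) 'Phi_n.
  apply: prod_dvd => // n /mapP[j]; rewrite mem_filter => /andP[Pj jin] ->.
    by rewrite expn_gt0 prime_gt0.
  exact: Pj.
have e : (size X)%:Z = R.[1] * (p ^ count P (iota 1 N))%:Z.
  have := congr1 (fun q : {poly int} => q.[1]) eR; rewrite /= mask1 hornerM.
  rewrite horner_prod /ns big_map big_seq.
  rewrite (eq_bigr (fun _ => p%:Z)); last first.
    move=> j; rewrite mem_filter mem_iota => /andP[_ /andP[j1 _]]. by rewrite Phi_pp1 // natz.
  rewrite -big_seq prod_const_seq size_filter => h.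
  by rewrite -natz h -(natz p) -natrX natz.
have : (((p ^ count P (iota 1 N))%N)%:Z %| (size X)%:Z)%Z by rewrite e dvdz_mull // dvdzz.
by rewrite dvdzE.
Qed.


Definition periodic (D : int -> Prop) (P : nat) := forall t : int, D t <-> D (t + P%:Z).

Lemma periodic_mul D P : periodic D P -> forall t (q : int), D t <-> D (t + q * P%:Z).
Proof.
move=> hP.
have hn : forall n : nat, forall t, D t <-> D (t + n%:Z * P%:Z).
  elim=> [|n IH] t'; first by rewrite mul0r addr0.
  rewrite (IH t') hP.
  have -> : (n.+1)%:Z * P%:Z = n%:Z * P%:Z + P%:Z by rewrite -addn1 PoszD mulrDl mul1r.
  by rewrite addrA.
move=> t [] n; first exact: hn.
rewrite NegzE (hn n.+1 (t + - n.+1%:Z * P%:Z)).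
by rewrite mulNr subrK.
Qed.

Definition dec (Q : Prop) : bool := if excluded_middle_informative Q then true else false.
Lemma decP Q : dec Q <-> Q.
Proof. by rewrite /dec; case: excluded_middle_informative. Qed.

Lemma Dlist (D : int -> Prop) P : exists Dl : seq nat, uniq Dl /\
  forall d : nat, d \in Dl <-> (d < P)%N /\ D d%:Z.
Proof.
exists [seq d <- iota 0 P | dec (D d%:Z)]; split; first by rewrite filter_uniq ?iota_uniq.
move=> d; rewrite mem_filter mem_iota leq0n add0n /=; split.
  by move=> /andP[h1 h2]; split => //; apply/decP.
by move=> [h1 h2]; rewrite h1 andbT; apply/decP.
Qed.

Lemma seqmax (B : seq nat) : B != [::] -> exists L, L \in B /\ forall b, b \in B -> (b <= L)%N.
Proof.
elim: B => [//|a B IH] _; case: (altP (B =P [::])) => [->|nB].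
  by exists a; split; rewrite ?inE // => b; rewrite inE => /eqP ->.
have [L [LB HL]] := IH nB; exists (maxn a L); split.
  by case: (leqP a L) => h; rewrite ?(maxn_idPr h) ?(maxn_idPl (ltnW h)) inE ?LB ?eqxx ?orbT.
move=> b; rewrite inE => /orP[/eqP ->|/HL]; first by rewrite leq_maxl.
by move=> h; rewrite (leq_trans h) // leq_maxr.
Qed.

Lemma tileE (B : seq nat) (D : int -> Prop) : tiles B D ->
  forall z : int, exists b d, [/\ b \in B, D d & z = b%:Z + d] /\
     forall b' d', b' \in B -> D d' -> z = b'%:Z + d' -> b' = b /\ d' = d.
Proof.
move=> T z; have [[b d] [[hb [hd he]] U]] := T z.
exists b, d; split; first by [].
move=> b' d' hb' hd' he'.
by have := U (b', d') (conj hb' (conj hd' he')) => -[-> ->].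
Qed.

Lemma newman (B : seq nat) (D : int -> Prop) : 0%N \in B -> tiles B D ->
  exists P, (0 < P)%N /\ periodic D P.
Proof.
move=> B0 T.
have nB : B != [::] by case: B B0 T.
have [L [LB HL]] := seqmax nB.
pose f (t : int) := dec (D t).
have fP : forall t, f t <-> D t by move=> t; exact: decP.
have fwd : forall n : int, f (n + L%:Z) =
    ~~ has (fun j : nat => f (n + j%:Z) && ((L - j)%N \in B)) (iota 0 L).
  move=> n; have [b [d [[hb hd he] U]]] := tileE T (n + L%:Z).
  case: (boolP (f (n + L%:Z))) => fnL; apply/esym.
    apply/hasPn => j; rewrite mem_iota add0n => /andP[_ jL].
    apply/negP => /andP[fj bj].
    have q1 : n + L%:Z = 0%N%:Z + (n + L%:Z) by lia.
    have q2 : n + L%:Z = (L - j)%N%:Z + (n + j%:Z) by lia.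
    have [_ e2] := U 0%N (n + L%:Z) B0 (proj1 (fP _) fnL) q1.
    have [_ e4] := U (L - j)%N (n + j%:Z) bj (proj1 (fP _) fj) q2.
    lia.
  apply: negbF; apply/hasP.
  have bL := HL b hb.
  have b0 : b != 0%N.
    apply/negP => /eqP b0; move: fnL; apply/negP/negPn/fP.
    by rewrite (_ : n + L%:Z = d) //; lia.
  exists (L - b)%N; first by rewrite mem_iota; lia.
  rewrite subKn // hb andbT; apply/fP.
  by rewrite (_ : n + (L - b)%N%:Z = d) //; lia.
have bwd : forall n : int, f n =
    ~~ has (fun j : nat => f (n + j%:Z) && ((L - j)%N \in B)) (iota 1 L).
  move=> n; have [b [d [[hb hd he] U]]] := tileE T (n + L%:Z).
  case: (boolP (f n)) => fn; apply/esym.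
    apply/hasPn => j; rewrite mem_iota => /andP[j1 jL].
    apply/negP => /andP[fj bj].
    have q1 : n + L%:Z = L%:Z + n by lia.
    have q2 : n + L%:Z = (L - j)%N%:Z + (n + j%:Z) by lia.
    have [_ e2] := U L n LB (proj1 (fP _) fn) q1.
    have [_ e4] := U (L - j)%N (n + j%:Z) bj (proj1 (fP _) fj) q2.
    lia.
  apply: negbF; apply/hasP.
  have bL := HL b hb.
  have b0 : b != L.
    apply/negP => /eqP b0; move: fn; apply/negP/negPn/fP.
    by rewrite (_ : n = d) //; lia.
  exists (L - b)%N; first by rewrite mem_iota; lia.
  rewrite subKn // hb andbT; apply/fP.
  by rewrite (_ : n + (L - b)%N%:Z = d) //; lia.
pose g := fun i : 'I_(2 ^ L).+1 => ([ffun j : 'I_L => f (i%:Z + j%:Z)] : {ffun 'I_L -> bool}).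
have ni : ~~ injectiveb g.
  apply/negP => /injectiveP inj; have := leq_card g inj.
  by rewrite card_ffun card_bool !card_ord ltnn.
have [x [y xy gxy]] := elimT (injectivePn g) ni.
have [a [c [ac Hac]]] : exists a c : nat, (a < c)%N /\
    forall j : 'I_L, f (a%:Z + j%:Z) = f (c%:Z + j%:Z).
  have Hj : forall j : 'I_L, f (x%:Z + j%:Z) = f (y%:Z + j%:Z).
    by move=> j; have := congr1 (fun F : {ffun 'I_L -> bool} => F j) gxy; rewrite /g !ffunE.
  case: (ltngtP x y) => h.
  - by exists x, y.
  - by exists y, x; split => // j; rewrite Hj.
  - by move: xy; rewrite (val_inj h) eqxx.
have agf : forall u : nat, f (a%:Z + u%:Z) = f (c%:Z + u%:Z).
  elim/ltn_ind => u IH.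
  case: (ltnP u L) => uL; first exact: (Hac (Ordinal uL)).
  have ea := fwd (a%:Z + (u - L)%N%:Z); have ec := fwd (c%:Z + (u - L)%N%:Z).
  rewrite (_ : a%:Z + (u - L)%N%:Z + L%:Z = a%:Z + u%:Z) in ea; last by lia.
  rewrite (_ : c%:Z + (u - L)%N%:Z + L%:Z = c%:Z + u%:Z) in ec; last by lia.
  rewrite ea ec; congr (~~ _); apply: eq_in_has => j; rewrite mem_iota => /andP[_ jL].
  rewrite (_ : a%:Z + (u - L)%N%:Z + j%:Z = a%:Z + (u - L + j)%N%:Z); last by lia.
  rewrite (_ : c%:Z + (u - L)%N%:Z + j%:Z = c%:Z + (u - L + j)%N%:Z); last by lia.
  by rewrite IH //; lia.
have agb : forall u : nat, forall t : int, - (u%:Z) <= t -> f (a%:Z + t) = f (c%:Z + t).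
  elim=> [|u IH] t ht.
    by rewrite (_ : t = (`|t|%N)%:Z); [exact: agf | lia].
  case: (boolP (- (u%:Z) <= t)) => h; first exact: IH.
  have ea := bwd (a%:Z + t); have ec := bwd (c%:Z + t).
  rewrite ea ec; congr (~~ _); apply: eq_in_has => j; rewrite mem_iota => /andP[j1 jL].
  rewrite -!addrA IH //; lia.
exists (c - a)%N; split; first by rewrite subn_gt0.
move=> t; rewrite -(fP t) -(fP (t + _)).
have q : - (`|t - a%:Z|%N%:Z) <= t - a%:Z by lia.
have := agb `|t - a%:Z|%N (t - a%:Z) q.
rewrite (_ : a%:Z + (t - a%:Z) = t); last by lia.
rewrite (_ : c%:Z + (t - a%:Z) = t + (c - a)%N%:Z); last by lia.
by move=> ->.
Qed.

Lemma exp_modP (z : algC) P n : z ^+ P = 1 -> z ^+ (n %% P) = z ^+ n.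
Proof.
by move=> zP; rewrite {2}(divn_eq n P) exprD mulnC exprM zP expr1n mul1r.
Qed.

Lemma mp (B Dl : seq nat) x y : (x,y) \in [seq (x,y) | x <- B, y <- Dl] -> x \in B /\ y \in Dl.
Proof. case/allpairsP => -[x1 y1] /= [h1 h2 e]. by case: e => -> ->. Qed.

Lemma counting (B : seq nat) (D : int -> Prop) (P : nat) (Dl : seq nat) :
  uniq B -> tiles B D -> (0 < P)%N -> periodic D P -> uniq Dl ->
  (forall d : nat, d \in Dl <-> (d < P)%N /\ D d%:Z) ->
  (size B * size Dl = P)%N /\
  forall z : algC, z ^+ P = 1 -> ev B z * ev Dl z = \sum_(r < P) z ^+ r.
Proof.
move=> uB T P0 hP uD hD.
set S := [seq (b + d) %% P | b <- B, d <- Dl]%N.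
have uS : uniq S.
  rewrite /S; apply: allpairs_uniq => //.
  move=> p q; case: p => b1 d1; case: q => b2 d2.
  move=> /mp[h1 h2] /mp[h3 h4] /= hm.
  have [_ D1] := proj1 (hD d1) h2; have [_ D2] := proj1 (hD d2) h4.
  have [d1P _] := proj1 (hD d1) h2; have [d2P _] := proj1 (hD d2) h4.
  have e1 := divn_eq (b1 + d1) P; have e2 := divn_eq (b2 + d2) P.
  set q := ((b1 + d1) %/ P)%N%:Z - ((b2 + d2) %/ P)%N%:Z.
  have heq : (b1 + d1)%N%:Z = b2%:Z + (d2%:Z + q * P%:Z).
    rewrite /q; rewrite hm in e1; lia.
  have Dq : D (d2%:Z + q * P%:Z) by exact: (proj1 (periodic_mul hP d2%:Z q) D2).
  have [[b d] [[hb [hd he]] U]] := T ((b1 + d1)%N%:Z).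
  have hb1 : (b1 + d1)%N%:Z = b1%:Z + d1%:Z by rewrite PoszD.
  have := U (b1, d1%:Z) (conj h1 (conj D1 hb1)).
  have := U (b2, d2%:Z + q * P%:Z) (conj h3 (conj Dq heq)).
  move=> E2 E1; have := etrans (esym E1) E2; case=> eb ed; subst b2.
  have q0 : q = 0 by nia.
  by move: ed; rewrite q0 mul0r addr0 => /eqP; rewrite eqz_nat => /eqP ->.
have mS : S =i iota 0 P.
  move=> r; rewrite mem_iota add0n leq0n /=; apply/idP/idP.
    by move=> /allpairsP[[b d] [_ _ ->]]; rewrite ltn_pmod.
  move=> rP; have [[b c] [[hb [hc he]] _]] := T r%:Z.
  have P0' : P%:Z != 0 by rewrite eqz_nat -lt0n.
  set c' := (c %% P%:Z)%Z.
  have c'0 : 0 <= c' by apply: modz_ge0.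
  have c'P : c' < P%:Z by apply: ltz_pmod; rewrite ltz_nat.
  have ec := divz_eq c P%:Z.
  have Dc' : D c'.
    have := proj1 (periodic_mul hP c (- (c %/ P%:Z)%Z)) hc.
    by rewrite {1}ec mulNr addrC addrA addNr add0r.
  apply/allpairsP; exists (b, `|c'|%N); split => //=.
    by apply/hD; split; [lia | rewrite gez0_abs].
  apply/eqP; rewrite -eqz_nat -modz_nat PoszD gez0_abs //.
  have -> : b%:Z + c' = r%:Z + (- (c %/ P%:Z)%Z) * P%:Z.
    rewrite -/c' in ec; move: (c %/ P%:Z)%Z ec => Q ec.
    simpl in he; clearbody c'; rewrite he ec; lia.
  by rewrite addrC modzMDl modz_nat modn_small.
have pS : perm_eq S (iota 0 P) by apply: uniq_perm; rewrite ?iota_uniq.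
split.
  by have := perm_size pS; rewrite size_allpairs size_iota.
move=> z zP.
rewrite /ev big_distrlr /=.
transitivity (\sum_(r <- S) z ^+ r).
  rewrite big_allpairs_dep /=; apply: eq_bigr => b _; apply: eq_bigr => d _.
  by rewrite exp_modP // exprD.
by rewrite (perm_big _ pS) /= -(subn0 P) -/(index_iota 0 P) big_mkord subn0.
Qed.


Lemma count_in_le (T : eqType) (a1 a2 : pred T) (s : seq T) :
  {in s, forall x, a1 x -> a2 x} -> (count a1 s <= count a2 s)%N.
Proof.
elim: s => [//|x s IH] H /=; rewrite leq_add //.
  by case: (boolP (a1 x)) => // /(H x (mem_head _ _)) ->.
by apply: IH => y ys; apply: H; rewrite inE ys orbT.
Qed.

Lemma count_le_e e b : count (fun j => (j <= e)%N) (iota 1 (e + b)) = e.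
Proof.
rewrite iotaD count_cat.
rewrite (@eq_in_count _ _ predT (iota 1 e)); last by move=> j; rewrite mem_iota => /andP[_ h] /=; lia.
rewrite (@eq_in_count _ _ pred0 (iota (1 + e) b)); last first.
  move=> j; rewrite mem_iota => /andP[h _] /=; apply/negbTE; lia.
by rewrite count_predT count_pred0 size_iota addn0.
Qed.

Lemma sum_roots_eq0 (z : algC) P n : n.-primitive_root z -> (1 < n)%N -> (n %| P)%N ->
  \sum_(r < P) z ^+ r = 0.
Proof.
move=> pz n1 nP.
have zP : z ^+ P = 1 by apply/eqP; rewrite -(prim_order_dvd pz).
have z1 : z - 1 != 0.
  rewrite subr_eq0; apply/negP => /eqP z1.
  have : (n %| 1)%N by rewrite (prim_order_dvd pz) expr1 z1.
  by rewrite dvdn1; lia.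
have := subrX1 z P; rewrite zP subrr => /esym/eqP; rewrite mulf_eq0 (negbTE z1) /=.
by move/eqP.
Qed.

Lemma cm (B : seq nat) (D : int -> Prop) (P : nat) (Dl : seq nat) :
  uniq B -> tiles B D -> (0 < P)%N -> periodic D P -> uniq Dl ->
  (forall d : nat, d \in Dl <-> (d < P)%N /\ D d%:Z) ->
  (size B * size Dl = P)%N /\
  forall s, prime_power s -> (SX B s <-> ((s %| P)%N /\ ~ SX Dl s)).
Proof.
move=> uB T P0 hP uD hD.
have [hsz hev] := counting uB T P0 hP uD hD.
split => // s [p [be [pp [be0 ->]]]].
have szB : (0 < size B)%N by move: P0; rewrite -hsz muln_gt0 => /andP[].
have szD : (0 < size Dl)%N by move: P0; rewrite -hsz muln_gt0 => /andP[].
set e := logn p P.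
pose a := fun j => ('Phi_(p ^ j) %| maskpoly B)%R.
pose b := fun j => ('Phi_(p ^ j) %| maskpoly Dl)%R.
have hab : forall j, (0 < j)%N -> (j <= e)%N -> a j || b j.
  move=> j j0 je.
  have pj0 : (0 < p ^ j)%N by rewrite expn_gt0 prime_gt0.
  have [z pz] := prim_exists pj0.
  have pjP : (p ^ j %| P)%N by rewrite pfactor_dvdn.
  have zP : z ^+ P = 1 by apply/eqP; rewrite -(prim_order_dvd pz).
  have := hev z zP; rewrite (sum_roots_eq0 pz) //; last first.
    by rewrite -{1}(expn0 p) ltn_exp2l ?prime_gt1.
  move/eqP; rewrite mulf_eq0 /a /b !(RCev _ pz).
  done.
have le : forall N, (count a (iota 1 N) + count b (iota 1 N) <= e)%N.
  move=> N; have := pcount_dvd B N pp; have := pcount_dvd Dl N pp.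
  rewrite !pfactor_dvdn // => h1 h2.
  by rewrite /e -hsz (lognM _ szB szD); exact: (leq_add h2 h1).
set N := (e + be)%N.
have cU : count (predU a b) (iota 1 N) = e /\ count (predI a b) (iota 1 N) = 0%N.
  have h1 := count_predUI a b (iota 1 N).
  have h2 : (e <= count (predU a b) (iota 1 N))%N.
    rewrite -{1}(count_le_e e be); apply: count_in_le => j; rewrite mem_iota => /andP[j1 _] je.
    by apply: hab.
  have := le N; lia.
have beI : be \in iota 1 N by rewrite mem_iota; lia.
rewrite /SX; split.
  move=> [_ aB]; have hA : a be by [].
  have nb : ~~ b be.
    apply/negP => hb; have : has (predI a b) (iota 1 N) by apply/hasP; exists be => //=; rewrite hA hb.
    by rewrite has_count (proj2 cU).
  split; last by move=> [_ hb]; move/negP: nb; apply.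
  rewrite pfactor_dvdn //; apply/negPn/negP; rewrite -ltnNge => ebe.
  have h1 := count_predUI (fun j => (j <= e)%N) (pred1 be) (iota 1 N).
  rewrite count_le_e in h1.
  have c1 : count (pred1 be) (iota 1 N) = 1%N by rewrite count_uniq_mem ?iota_uniq ?beI.
  have c0 : count (predI (fun j => (j <= e)%N) (pred1 be)) (iota 1 N) = 0%N.
    rewrite (@eq_count _ _ pred0) ?count_pred0 // => j /=.
    by apply/negP => /andP[je /eqP jb]; subst j; lia.
  have : (count (predU (fun j => (j <= e)%N) (pred1 be)) (iota 1 N) <= count (predU a b) (iota 1 N))%N.
    apply: count_in_le => j; rewrite mem_iota => /andP[j1 _] /orP[je|/eqP ->].
      exact: hab.
    by rewrite /= hA.
  rewrite (proj1 cU); rewrite c0 c1 addn0 in h1; rewrite h1; lia.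
move=> [sP nD]; split; first by exists p, be.
have : a be || b be.
  apply: hab => //; by rewrite -pfactor_dvdn.
case/orP => // hb; exfalso; apply: nD; split => //; by exists p, be.
Qed.


Lemma seqminP (s : seq nat) : s != [::] ->
  seqmin s \in s /\ forall x, x \in s -> (seqmin s <= x)%N.
Proof.
have H : forall y (t : seq nat), foldr minn y t \in y :: t /\ (foldr minn y t <= y)%N /\
    forall x, x \in t -> (foldr minn y t <= x)%N.
  move=> y; elim=> [|a t [IH1 [IH2 IH3]]] /=; first by rewrite inE eqxx leqnn.
  split.
    have [->|->] : minn a (foldr minn y t) = a \/ minn a (foldr minn y t) = foldr minn y t.
      by case: (leqP a (foldr minn y t)) => h; [left | right]; lia.
      by rewrite !inE eqxx orbT.
    by move: IH1; rewrite !inE => /orP[->|->]; rewrite ?orbT.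
  split; first by rewrite geq_min IH2 orbT.
  move=> x; rewrite inE => /orP[/eqP ->|/IH3 h]; first by rewrite geq_min leqnn.
  by rewrite geq_min h orbT.
case: s => [//|a s] _.
change (foldr minn a (a :: s) \in a :: s /\ forall x, x \in a :: s -> (foldr minn a (a :: s) <= x)%N).
have [h1 [h2 h3]] := H a (a :: s).
split; last exact: h3.
by move: h1; rewrite inE => /orP[/eqP ->|//]; rewrite mem_head.
Qed.

Lemma comp_Xn (q : {poly int}) n : 'X^n \Po q = q ^+ n.
Proof.
elim: n => [|n IH]; first by rewrite expr0 comp_polyC.
by rewrite !exprS comp_polyM comp_polyX IH.
Qed.

Lemma mask_comp X k : maskpoly X \Po 'X^k = \sum_(b <- X) 'X^(b * k).
Proof.
rewrite /maskpoly; elim: X => [|b X IH]; first by rewrite !big_nil comp_poly0.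
by rewrite !big_cons comp_polyD IH comp_Xn -exprM mulnC.
Qed.

Lemma partition_sum (R : zmodType) (F : nat -> R) (A : seq nat) k : (0 < k)%N ->
  \sum_(a <- A) F a = \sum_(i < k) \sum_(a <- A | (a %% k == i)%N) F a.
Proof.
move=> k0.
rewrite (exchange_big_dep predT) //=.
apply: eq_bigr => a _.
rewrite (big_pred1 (Ordinal (ltn_pmod a k0))) // => i /=.
Qed.

Lemma modk_int (a b : nat) (q : int) k : a%:Z = b%:Z + q * k%:Z -> (a %% k)%N = (b %% k)%N.
Proof. by move=> e; apply/eqP; rewrite -eqz_nat -!modz_nat e addrC modzMDl. Qed.

Lemma dvdzP' (k : nat) (c : int) : (k%:Z %| c)%Z -> exists q : int, c = q * k%:Z.
Proof. by move/dvdzP. Qed.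

Lemma Ares_ne A (C : int -> Prop) k i : (0 < k)%N -> (forall c, C c -> (k%:Z %| c)%Z) ->
  tiles A C -> (i < k)%N -> Ares A k i != [::].
Proof.
move=> k0 Ck T ik.
have [a [c [[hA hC he] _]]] := tileE T i%:Z.
have [q eqc] := dvdzP' (Ck c hC).
have am : (a %% k)%N = i.
  rewrite -(modn_small ik); apply: (@modk_int _ _ (- q)).
  by rewrite he eqc; lia.
apply/negP => /eqP e.
have : a \in Ares A k i by rewrite mem_filter am eqxx hA.
by rewrite e.
Qed.

Lemma Ares_mem A k i a : (a \in Ares A k i) = (a \in A) && (a %% k == i)%N.
Proof. by rewrite mem_filter andbC. Qed.

Lemma amin_mem A k i : Ares A k i != [::] ->
  amin A k i \in Ares A k i /\ forall a, a \in Ares A k i -> (amin A k i <= a)%N.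
Proof. exact: seqminP. Qed.

Lemma Ares_form A k i a : (0 < k)%N -> Ares A k i != [::] -> a \in Ares A k i ->
  a = (amin A k i + k * ((a - amin A k i) %/ k))%N.
Proof.
move=> k0 ne ha; have [hm hmin] := amin_mem ne.
have le := hmin a ha.
move: ha hm; rewrite !Ares_mem => /andP[_ /eqP ha] /andP[_ /eqP hm].
have : (a == amin A k i %[mod k]) by rewrite ha hm.
rewrite eqn_mod_dvd // => /divnK h; lia.
Qed.

Lemma Abar_map A k i : uniq A -> (0 < k)%N -> Ares A k i != [::] ->
  Abar A k i = [seq ((a - amin A k i) %/ k)%N | a <- Ares A k i].
Proof.
move=> uA k0 ne; rewrite /Abar undup_id //.
rewrite map_inj_in_uniq ?filter_uniq // => a b ha hb e.
by rewrite (Ares_form k0 ne ha) (Ares_form k0 ne hb) e.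
Qed.

Lemma memAbar A k i b : uniq A -> (0 < k)%N -> (i < k)%N -> Ares A k i != [::] ->
  (b \in Abar A k i) = ((amin A k i + k * b)%N \in A).
Proof.
move=> uA k0 ik ne; rewrite (Abar_map uA k0 ne).
have [hm _] := amin_mem ne.
apply/mapP/idP.
  by move=> [a ha ->]; rewrite -(Ares_form k0 ne ha); move: ha; rewrite Ares_mem => /andP[].
move=> h; exists (amin A k i + k * b)%N.
  rewrite Ares_mem h /=; move: hm; rewrite Ares_mem => /andP[_ /eqP hm].
  by rewrite addnC mulnC modnMDl hm.
by rewrite addKn mulKn.
Qed.

Lemma Abar_uniq A k i : uniq (Abar A k i).
Proof. exact: undup_uniq. Qed.

Lemma size_Abar A k i : uniq A -> (0 < k)%N -> Ares A k i != [::] ->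
  size (Abar A k i) = size (Ares A k i).
Proof. by move=> uA k0 ne; rewrite (Abar_map uA k0 ne) size_map. Qed.

Lemma zero_Abar A k i : uniq A -> (0 < k)%N -> (i < k)%N -> Ares A k i != [::] ->
  0%N \in Abar A k i.
Proof.
move=> uA k0 ik ne; rewrite memAbar // muln0 addn0.
by have [hm _] := amin_mem ne; move: hm; rewrite Ares_mem => /andP[].
Qed.

Lemma decomp A (C : int -> Prop) k : uniq A -> (0 < k)%N ->
  (forall c, C c -> (k%:Z %| c)%Z) -> tiles A C ->
  maskpoly A = \sum_(i < k) 'X^(amin A k i) * (maskpoly (Abar A k i) \Po 'X^k).
Proof.
move=> uA k0 Ck T.
rewrite {1}/maskpoly (partition_sum _ _ k0); apply: eq_bigr => i _.
have ne := Ares_ne k0 Ck T (ltn_ord i).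
rewrite mask_comp (Abar_map uA k0 ne) big_map big_distrr /= -big_filter.
apply: eq_big_seq => a ha; rewrite -exprD; congr 'X^_.
by rewrite {1}(Ares_form k0 ne ha) mulnC.
Qed.

Lemma Abar_tiles A (C : int -> Prop) k i : uniq A -> (0 < k)%N ->
  (forall c, C c -> (k%:Z %| c)%Z) -> tiles A C -> (i < k)%N ->
  tiles (Abar A k i) (Cdiv C k).
Proof.
move=> uA k0 Ck T ik z.
have ne := Ares_ne k0 Ck T ik.
have [hm _] := amin_mem ne.
set ai := amin A k i in hm *.
have [a [c [[hA hC he] U]]] := tileE T (ai%:Z + k%:Z * z).
have [q eqc] := dvdzP' (Ck c hC).
have kz : k%:Z != 0 by rewrite eqz_nat -lt0n.
have ha : a \in Ares A k i.
  rewrite Ares_mem hA /=; move: hm; rewrite Ares_mem => /andP[_ /eqP <-].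
  by apply/eqP; apply: (@modk_int _ _ (z - q)); rewrite eqc in he; lia.
set b := ((a - ai) %/ k)%N.
have ab : a = (ai + k * b)%N by exact: (Ares_form k0 ne ha).
have hb : b \in Abar A k i by rewrite memAbar // -ab.
exists (b, q); split.
  split => //; split; first by rewrite /Cdiv mulrC -eqc.
  have h : k%:Z * z = k%:Z * (b%:Z + q) by move: he; rewrite eqc ab; lia.
  exact: (mulfI kz h).
move=> [b' d'] /= [hb' [hd' hz]].
have hA' := hb'; rewrite memAbar // in hA'.
have hw : ai%:Z + k%:Z * z = (ai + k * b')%N%:Z + k%:Z * d' by rewrite hz; lia.
have [e1 e2] := U _ _ hA' hd' hw.
have bb : b' = b by move: e1; rewrite ab => /eqP; rewrite eqn_add2l eqn_mul2l (negbTE (lt0n_neq0 k0)) /= => /eqP.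
subst b'; congr (_, _).
have h : k%:Z * d' = k%:Z * q by rewrite e2 eqc mulrC.
exact: (esym (mulfI kz h)).
Qed.


Lemma ev_scale X k z : ev (scaleset k X) z = ev X (z ^+ k).
Proof. by rewrite /ev big_map; apply: eq_bigr => b _; rewrite exprM. Qed.

Lemma mask_scale X k : maskpoly X \Po 'X^k = maskpoly (scaleset k X).
Proof. by rewrite mask_comp /maskpoly big_map; apply: eq_bigr => b _; rewrite mulnC. Qed.

Lemma ev_decomp A (C : int -> Prop) k z : uniq A -> (0 < k)%N ->
  (forall c, C c -> (k%:Z %| c)%Z) -> tiles A C ->
  ev A z = \sum_(i < k) z ^+ (amin A k i) * ev (Abar A k i) (z ^+ k).
Proof.
move=> uA k0 Ck T.
rewrite -pC_mask (decomp uA k0 Ck T) /pC rmorph_sum horner_sum; apply: eq_bigr => i _.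
rewrite rmorphM hornerM mask_scale -/(pC _) pC_mask ev_scale.
by rewrite rmorphXn /= map_polyX hornerXn.
Qed.

Lemma pp_pdiv s : prime_power s -> exists p b, [/\ prime p, (0 < b)%N, s = (p ^ b)%N & pdiv s = p].
Proof.
move=> [p [b [pp [b0 ->]]]]; exists p, b; split => //.
by rewrite -(prednK b0) pdiv_pfactor.
Qed.

Lemma pp_gt0 s : prime_power s -> (0 < s)%N.
Proof. by move=> [p [b [pp [b0 ->]]]]; rewrite expn_gt0 prime_gt0. Qed.

Lemma SX_scale_coprime X k s : prime k -> prime_power s -> pdiv s != k ->
  SX (scaleset k X) s <-> SX X s.
Proof.
move=> pk ps; have [p [b [pp b0 es ds]]] := pp_pdiv ps; rewrite ds => pk'.
have [z pz] := prim_exists (pp_gt0 ps).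
have pzk : s.-primitive_root (z ^+ k).
  rewrite (prim_root_exp_coprime _ pz) es coprime_pexpr // prime_coprime //.
  by rewrite dvdn_prime2 // eq_sym.
rewrite /SX (RCev _ pz) (RCev _ pzk) ev_scale; tauto.
Qed.

Lemma SX_scale_pow X k b : prime k -> (2 <= b)%N ->
  SX (scaleset k X) (k ^ b) <-> SX X (k ^ b.-1).
Proof.
move=> pk b2.
have kb0 : (0 < k ^ b)%N by rewrite expn_gt0 prime_gt0.
have [z pz] := prim_exists kb0.
have ekb : (k ^ b = k ^ b.-1 * k)%N by rewrite -expnSr prednK //; lia.
have pzk : (k ^ b.-1).-primitive_root (z ^+ k).
  have := dvdn_prim_root pz (dvdn_exp2l k (leq_pred b)).
  by rewrite ekb mulKn // expn_gt0 prime_gt0.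
rewrite /SX (RCev _ pz) (RCev _ pzk) ev_scale.
have h1 : prime_power (k ^ b) by exists k, b; split => //; lia.
have h2 : prime_power (k ^ b.-1) by exists k, b.-1; split => //; lia.
tauto.
Qed.

Lemma SX_scale_k X k : prime k -> (0 < size X)%N -> ~ SX (scaleset k X) k.
Proof.
move=> pk sz [_]; have [z pz] := prim_exists (prime_gt0 pk).
rewrite (RCev _ pz) ev_scale (prim_expr_order pz) evC1 pnatr_eq0; lia.
Qed.

Lemma coprime_prod k (ss : seq nat) : (forall s, s \in ss -> coprime k s) ->
  coprime k (\prod_(s <- ss) s).
Proof.
elim: ss => [|a ss IH] H; first by rewrite big_nil coprimen1.
rewrite big_cons coprimeMr H ?mem_head //=; apply: IH => s hs.
by apply: H; rewrite inE hs orbT.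
Qed.

Unset Implicit Arguments. Set Strict Implicit.

Theorem lemma2p5 (A : seq nat) (C : int -> Prop) (k : nat) :
  uniq A -> (1 < k)%N ->
  (forall c, C c -> (k%:Z %| c)%Z) ->
  tiles A C ->
  (* (1) *)
  maskpoly A = \sum_(i < k) 'X^(amin A k i) * (maskpoly (Abar A k i) \Po 'X^k)
  (* (2) *)
  /\ (forall i, (i < k)%N -> tiles (Abar A k i) (Cdiv C k))
  (* (3) *)
  /\ (forall i, (i < k)%N -> (size (Abar A k i) * k)%N = size A)
  (* (4) *)
  /\ (forall i j, (i < k)%N -> (j < k)%N ->
        forall s, SX (Abar A k i) s <-> SX (Abar A k j) s)
  (* (5) *)
  /\ (prime k ->
        (forall s, SX A s <-> (s = k \/ SX (scaleset k (Abar A k 0)) s))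
        /\ ((forall i, (i < k)%N -> T2 (Abar A k i)) -> T2 A)).
Proof.
move=> uA k1 Ck T.
have k0 : (0 < k)%N by lia.
have ne : forall i, (i < k)%N -> Ares A k i != [::].
  by move=> i ik; exact: Ares_ne k0 Ck T ik.
have tl : forall i, (i < k)%N -> tiles (Abar A k i) (Cdiv C k).
  by move=> i ik; exact: Abar_tiles uA k0 Ck T ik.
have [P' [P0 hP]] := newman (zero_Abar uA k0 k0 (ne 0%N k0)) (tl 0%N k0).
have [Dl [uD hD]] := Dlist (Cdiv C k) P'.
have cmi : forall i, (i < k)%N -> (size (Abar A k i) * size Dl = P')%N /\
   forall s, prime_power s -> (SX (Abar A k i) s <-> ((s %| P')%N /\ ~ SX Dl s)).
  by move=> i ik; apply: cm => //; [exact: Abar_uniq | exact: tl].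
have szD : (0 < size Dl)%N.
  by have [h _] := cmi 0%N k0; move: P0; rewrite -h muln_gt0 => /andP[].
have hPC : periodic C (k * P').
  have key : forall u : int, C (u * k%:Z) <-> C (u * k%:Z + (k * P')%N%:Z).
    move=> u; have := hP u; rewrite /Cdiv.
    have -> : k%:Z * (u + P'%:Z) = u * k%:Z + (k * P')%N%:Z by lia.
    by rewrite mulrC.
  move=> t; split => h.
    have [u eu] := dvdzP' (Ck _ h); rewrite eu in h *; exact/key.
  have [u eu] := dvdzP' (Ck _ h).
  have et : t = (u - P'%:Z) * k%:Z by lia.
  rewrite et; apply/key; rewrite -et; exact: h.
have hDC : forall d : nat, d \in scaleset k Dl <-> (d < k * P')%N /\ C d%:Z.
  move=> d; split.
    move=> /mapP[x hx ->]; have [xP Dx] := proj1 (hD x) hx.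
    by split; [rewrite ltn_pmul2l | rewrite PoszM].
  move=> [dl Cd].
  have kd : (k %| d)%N by move: (Ck _ Cd); rewrite dvdzE.
  apply/mapP; exists (d %/ k)%N; last by rewrite mulnC divnK.
  apply/hD; split.
    by rewrite -(ltn_pmul2l k0) mulnC divnK.
  by rewrite /Cdiv -PoszM mulnC divnK.
have uDC : uniq (scaleset k Dl).
  rewrite map_inj_uniq // => x y h; apply/eqP; rewrite -(eqn_pmul2l k0); exact/eqP.
have kP0 : (0 < k * P')%N by rewrite muln_gt0 k0 P0.
have [szA cmA] := cm uA T kP0 hPC uDC hDC.
have all_i : forall i s, (i < k)%N -> SX (Abar A k 0) s -> SX (Abar A k i) s.
  move=> i s ik h; have ps := proj1 h.
  apply: (proj2 (proj2 (cmi i ik) s ps)); exact: (proj1 (proj2 (cmi 0%N k0) s ps) h).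
split; first exact: decomp uA k0 Ck T.
split; first exact: tl.
split.
  move=> i ik; have [h1 _] := cmi i ik; have [h0 _] := cmi 0%N k0.
  have si : size (Abar A k i) = size (Abar A k 0).
    by apply/eqP; rewrite -(eqn_pmul2r szD) h1 h0.
  have : (size A * size Dl = k * (size (Abar A k 0) * size Dl))%N.
    by rewrite -{1}(size_map (muln k) Dl) szA h0.
  rewrite si mulnA => /eqP; rewrite eqn_pmul2r // => /eqP ->; by rewrite mulnC.
split.
  move=> i j ik jk s; split => h; have ps := proj1 h.
    exact: (proj2 (proj2 (cmi j jk) s ps) (proj1 (proj2 (cmi i ik) s ps) h)).
  exact: (proj2 (proj2 (cmi i ik) s ps) (proj1 (proj2 (cmi j jk) s ps) h)).
move=> pk.
have szA0 : (0 < size (Abar A k 0))%N.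
  by have [h _] := cmi 0%N k0; move: P0; rewrite -h muln_gt0 => /andP[].
have keyA1 : forall s, prime_power s -> pdiv s != k -> (SX A s <-> SX (Abar A k 0) s).
  move=> s ps nk.
  have h1 := cmA s ps; have h2 := proj2 (cmi 0%N k0) s ps.
  have h3 := SX_scale_coprime Dl pk ps nk.
  have [p [b [pp b0 es ds]]] := pp_pdiv ps.
  have h4 : (s %| k * P')%N = (s %| P')%N.
    apply: Gauss_dvdr; rewrite es coprime_pexpl // prime_coprime // dvdn_prime2 //.
    by rewrite -ds.
  rewrite h4 in h1; tauto.
have keyA2 : forall b, (2 <= b)%N -> (SX A (k ^ b) <-> SX (Abar A k 0) (k ^ b.-1)).
  move=> b b2.
  have ps : prime_power (k ^ b) by exists k, b; split => //; lia.
  have ps' : prime_power (k ^ b.-1) by exists k, b.-1; split => //; lia.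
  have h1 := cmA _ ps; have h2 := proj2 (cmi 0%N k0) _ ps'.
  have h3 := SX_scale_pow Dl pk b2.
  have h4 : (k ^ b %| k * P')%N = (k ^ b.-1 %| P')%N.
    by rewrite -{1}(prednK (ltnW b2)) expnS dvdn_pmul2l.
  rewrite h4 in h1; tauto.
have keyAk : SX A k.
  have ps : prime_power k by exists k, 1%N; rewrite expn1.
  have h1 := cmA _ ps; have h3 := SX_scale_k pk szD.
  apply/h1; split; [exact: dvdn_mulr | exact: h3].
split.
  move=> s; split.
    move=> hA; have ps := proj1 hA; have [p [b [pp b0 es ds]]] := pp_pdiv ps.
    case: (eqVneq p k) => [pk'|pk'].
      rewrite pk' in es ds; case: (eqVneq b 1) => [b1|b1]; first by left; rewrite es b1 expn1.
      right; have b2 : (2 <= b)%N by lia.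
      rewrite es in hA *; apply: (proj2 (SX_scale_pow _ pk b2)); exact: (proj1 (keyA2 b b2) hA).
    right; have nk : pdiv s != k by rewrite ds.
    apply: (proj2 (SX_scale_coprime _ pk ps nk)); exact: (proj1 (keyA1 s ps nk) hA).
  case=> [->|hB]; first exact: keyAk.
  have ps := proj1 hB; have [p [b [pp b0 es ds]]] := pp_pdiv ps.
  case: (eqVneq p k) => [pk'|pk'].
    rewrite pk' in es ds; case: (eqVneq b 1) => [b1|b1]; first by rewrite es b1 expn1.
    have b2 : (2 <= b)%N by lia.
    rewrite es in hB *; apply: (proj2 (keyA2 b b2)); exact: (proj1 (SX_scale_pow _ pk b2) hB).
  have nk : pdiv s != k by rewrite ds.
  apply: (proj2 (keyA1 s ps nk)); exact: (proj1 (SX_scale_coprime _ pk ps nk) hB).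
move=> HT ss nss Hss upd.
have ssp : forall s, s \in ss -> prime_power s by move=> s hs; exact: proj1 (Hss s hs).
set n := \prod_(s <- ss) s.
have n0 : (0 < n)%N.
  by rewrite /n big_seq; apply: prodn_cond_gt0 => s hs; exact: pp_gt0 (ssp s hs).
have [z pz] := prim_exists n0.
rewrite (RCev _ pz).
have fin : forall ss', ss' != [::] -> (\prod_(s <- ss') s).-primitive_root (z ^+ k) ->
    (forall s, s \in ss' -> SX (Abar A k 0) s) -> uniq (map pdiv ss') -> ev A z == 0.
  move=> ss' ne' pz' hs' u'; rewrite (ev_decomp z uA k0 Ck T) big1 // => i _.
  have : ('Phi_(\prod_(s <- ss') s) %| maskpoly (Abar A k i))%R.
    by apply: (HT i (ltn_ord i)) => // s hs; apply: all_i (hs' s hs).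
  by rewrite (RCev _ pz') => /eqP ->; rewrite mulr0.
case: (boolP (has (fun s => pdiv s == k) ss)) => [/hasP[s0 s0in /eqP ds0] | /hasPn nok].
  have ps0 := ssp s0 s0in; have [p [b [pp b0 es ds]]] := pp_pdiv ps0.
  have pk' : p = k by rewrite -ds ds0.
  rewrite pk' in es ds.
  have prm := perm_to_rem s0in; set r := rem s0 ss in prm.
  have en : n = (s0 * \prod_(s <- r) s)%N by rewrite /n (perm_big _ prm) big_cons.
  have upd' : uniq (pdiv s0 :: map pdiv r).
    by rewrite -(perm_uniq (perm_map pdiv prm)).
  have ur : uniq (map pdiv r) by move: upd' => /andP[].
  have hr : forall s, s \in r -> SX (Abar A k 0) s.
    move=> s hs; have sin : s \in ss by rewrite (perm_mem prm) inE hs orbT.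
    have ps := ssp s sin.
    have nk : pdiv s != k.
      apply/eqP => e; move: upd' => /= /andP[/negP H _]; apply: H.
      by rewrite ds0 -e; apply: map_f.
    exact: (proj1 (keyA1 s ps nk) (Hss s sin)).
  have r0 : (0 < \prod_(s <- r) s)%N.
    rewrite big_seq; apply: prodn_cond_gt0 => s hs; apply: pp_gt0; apply: ssp.
    by rewrite (perm_mem prm) inE hs orbT.
  case: (eqVneq b 1) => [b1|b1].
    case: (eqVneq r [::]) => [rn|rne].
      have : ('Phi_n %| maskpoly A)%R.
        by rewrite en rn big_nil muln1 es b1 expn1; exact: proj2 keyAk.
      by rewrite (RCev _ pz).
    apply: (fin r) => //.
    have dv : (\prod_(s <- r) s %| n)%N by rewrite en dvdn_mull.
    by have := dvdn_prim_root pz dv; rewrite en mulnK // es b1 expn1.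
  have b2 : (2 <= b)%N by lia.
  apply: (fin (k ^ b.-1 :: r)%N) => //.
  - have e2 : n = (k * \prod_(s <- (k ^ b.-1 :: r)%N) s)%N.
      by rewrite en big_cons es mulnA -expnS prednK //; lia.
    have dv : (\prod_(s <- (k ^ b.-1 :: r)%N) s %| n)%N by rewrite e2 dvdn_mull.
    have := dvdn_prim_root pz dv; rewrite e2 mulnK //.
    by rewrite big_cons muln_gt0 r0 andbT expn_gt0 prime_gt0.
  - move=> s; rewrite inE => /orP[/eqP ->|]; last exact: hr.
    apply: (proj1 (keyA2 b b2)); rewrite -es; exact: Hss.
  - have pd : pdiv (k ^ b.-1) = k.
      have h : (0 < b.-1)%N by lia.
      by rewrite -(prednK h) pdiv_pfactor.
    by rewrite /= pd -ds0.
apply: (fin ss) => //.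
- rewrite (prim_root_exp_coprime _ pz) coprime_prod // => s hs.
  have [p [b [pp b0 es ds]]] := pp_pdiv (ssp s hs).
  rewrite es coprime_pexpr // prime_coprime // dvdn_prime2 // eq_sym -ds.
  exact: nok.
- move=> s hs; have ps := ssp s hs; exact: (proj1 (keyA1 s ps (nok s hs)) (Hss s hs)).
Qed.
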